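(* For any real numbers $0\le q_1,q_2\le 1$ there exist a non-principal ultrafilter $\mathcal U$ on $\mathbb N$ and coprime natural numbers $2\le a_i<b_i$ ($i\in\mathbb N$) such that the ultraproduct $S=\prod_{\mathcal U}S_i$ of the semigroups $S_i=\{xa_i+yb_i:x,y\in\mathbb N\}$ is a (nontrivial) limit 2-semigroup with generators $a=[(a_i)]_{\mathcal U}$, $b=[(b_i)]_{\mathcal U}$ satisfying $r(b-\alpha(b),a)=q_1$ and $r(\beta_1,ab)=q_2$.
   Context: Each $S_i$ is an ordered monoid in the language $\{+,<,0\}$; a limit 2-semigroup is an ultraproduct $\prod_{\mathcal U}S_i$ over a non-principal ultrafilter $\mathcal U$ that is not isomorphic to a standard numerical semigroup, and its generators are $a=[(a_i)]_{\mathcal U}$, $b=[(b_i)]_{\mathcal U}$. In a standard 2-semigroup with generators $a<b$: $\alpha(b)$ is the largest multiple of $a$ that is $\le b$ (namely $\lfloor b/a\rfloor a$); $\beta_1$ is the least multiple of $b$ that is $\equiv1\pmod a$, i.e. $\beta_1=kb$ with $0\le k<a$, $kb\equiv 1 \pmod a$; $ab$ is the product. These are first-order definable uniformly, so they have interpretations in $S$ (coordinatewise). For elements $x\ge x'$ and $y>y'$ of $S$, the ratio is $r(x-x',y-y')=\sup\{p/q : p,q\in\mathbb Z_{\ge0},\ q\ne0,\ S\models p\,y+q\,x'\le q\,x+p\,y'\}$, where $p\,y$ denotes $y$ added to itself $p$ times; $r(x_0,y-y')$ abbreviates the case $x'=0$, $x=x_0$ (and similarly for $y$). Thus $r(b-\alpha(b),a)=\sup\{p/q: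 S\models p a+q\alpha(b)\le qb\}$ and $r(\beta_1,ab)=\sup\{p/q: S\models p\,ab\le q\beta_1\}$. *)

(* Defs.v *)
From Stdlib Require Import Reals Arith List.
Open Scope R_scope.

Definition ultrafilter (U : (nat -> Prop) -> Prop) : Prop :=
  (~ U (fun _ => False)) /\
  U (fun _ => True) /\
  (forall A B : nat -> Prop, U A -> (forall i, A i -> B i) -> U B) /\
  (forall A B : nat -> Prop, U A -> U B -> U (fun i => A i /\ B i)) /\
  (forall A : nat -> Prop, U A \/ U (fun i => ~ A i)).

Definition nonprincipal (U : (nat -> Prop) -> Prop) : Prop :=
  forall n : nat, ~ U (fun i => i = n).

Definition in_sg (a b x : nat) : Prop := exists u v : nat, x = (u * a + v * b)%nat.

(** Elements of the ultraproduct prod_U S_i (S_i = S_{A i, B i}) are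
    represented by sequences that lie U-almost everywhere in S_i;
    two representatives denote the same element iff they agree U-a.e.;
    +, <, 0 are interpreted coordinatewise (U-a.e.). *)
Definition up_elt (U : (nat -> Prop) -> Prop) (A B : nat -> nat) (x : nat -> nat) :=
  U (fun i => in_sg (A i) (B i) (x i)).
Definition up_eq (U : (nat -> Prop) -> Prop) (x y : nat -> nat) := U (fun i => x i = y i).
Definition up_lt (U : (nat -> Prop) -> Prop) (x y : nat -> nat) := U (fun i => (x i < y i)%nat).
Definition up_add (x y : nat -> nat) : nat -> nat := fun i => (x i + y i)%nat.
Definition up_zero : nat -> nat := fun _ => 0%nat.

Definition numerical_semigroup (T : nat -> Prop) : Prop :=
  T 0%nat /\ (forall x y, T x -> T y -> T (x + y)%nat) /\
  exists N : nat, forall n, (N <= n)%nat -> T n.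

Definition up_iso (U : (nat -> Prop) -> Prop) (A B : nat -> nat)
    (T : nat -> Prop) (f : (nat -> nat) -> nat) : Prop :=
  (forall x, up_elt U A B x -> T (f x)) /\
  (forall t, T t -> exists x, up_elt U A B x /\ f x = t) /\
  (forall x y, up_elt U A B x -> up_elt U A B y -> (f x = f y <-> up_eq U x y)) /\
  (forall x y, up_elt U A B x -> up_elt U A B y -> f (up_add x y) = (f x + f y)%nat) /\
  (forall x y, up_elt U A B x -> up_elt U A B y -> ((f x < f y)%nat <-> up_lt U x y)) /\
  f up_zero = 0%nat.

Definition limit_2_semigroup (U : (nat -> Prop) -> Prop) (A B : nat -> nat) : Prop :=
  ~ (exists (T : nat -> Prop) (f : (nat -> nat) -> nat), numerical_semigroup T /\ up_iso U A B T f).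

Definition alpha (a b : nat) : nat := (b / a * a)%nat.
Definition beta1 (a b : nat) : nat :=
  (b * match List.find (fun k => Nat.eqb ((k * b) mod a) (1 mod a)) (List.seq 0 a) with
       | Some k => k | None => 0 end)%nat.

(** The ratio r(x - x', y - y') : its defining set
    { p/q : S |= p y + q x' <= q x + p y' }, with atomic truth in the
    ultraproduct evaluated coordinatewise (U-a.e.). *)
Definition ratio_set (U : (nat -> Prop) -> Prop) (x x' y y' : nat -> nat) : R -> Prop :=
  fun r => exists p q : nat, q <> 0%nat /\
    U (fun i => (p * y i + q * x' i <= q * x i + p * y' i)%nat) /\
    r = INR p / INR q.

(* Main.v *)
Require Import Defs.
From Stdlib Require Import Reals Arith Lia List ZArith Lra IndefiniteDescription.
From mathcomp Require all_boot boolp classical_sets filter.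

Module UF.
Import all_boot boolp classical_sets filter.
Local Open Scope classical_set_scope.

Lemma uf_exists : exists U : (nat -> Prop) -> Prop,
  ultrafilter U /\ nonprincipal U /\ (forall N, U (fun i => Peano.le N i)).
Proof.
have [G [GU sub]] := ultraFilterLemma (@eventually_filter).
have GF : ProperFilter G := ultra_proper.
have ev : forall N, G (fun i => Peano.le N i).
  move=> N; apply: sub; exists N => // i /= /leP //.
exists G; split; last split.
- split; first by move=> h; apply: (filter_not_empty G); have -> : set0 = (fun _ : nat => False) by [].
  split; first exact: filterT.
  split; first by move=> A B GA AB; apply: (filterS _ GA) => i /AB.
  split; first by move=> A B GA GB; exact: (filterI GA GB).
  move=> A; have := in_ultra_setVsetC A GU; case=> h; [left|right]; exact h.
- move=> n Gn; apply: (filter_not_empty G).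
  apply: (filterS _ (filterI Gn (ev n.+1))) => i [-> /leP]; rewrite ltnn.
  done.
- exact: ev.
Qed.
End UF.

Open Scope nat_scope.
Lemma family (g h a b n : nat) : 0 < h -> 0 < b -> Nat.gcd h g = 1 -> Nat.gcd b a = 1 -> 1 <= n ->
  exists A r k m, r * k = m * A + 1 /\ h * r = g * A + b /\ b * k = a * A + h /\ h * n * b <= A.
Proof.
  intros Hh Hb G1 G2 Hn.
  destruct (Nat.gcd_bezout_pos h g Hh) as [c [d Hcd]]. rewrite G1 in Hcd.
  destruct (Nat.gcd_bezout_pos b a Hb) as [w4 [w3 Hw]]. rewrite G2 in Hw.
  exists ((d + h * n) * b + h * w3), ((c + g * n) * b + g * w3),
         ((d + h * n) * a + h * w4), ((c + g * n) * a + g * w4).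
  split; [|split; [|split]].
  - assert (E : ((c + g * n) * b + g * w3) * ((d + h * n) * a + h * w4)
        + (c * h) * (a * w3) + (d * g) * (w4 * b)
        = ((c + g * n) * a + g * w4) * ((d + h * n) * b + h * w3)
        + (c * h) * (w4 * b) + (d * g) * (a * w3)) by ring.
    rewrite Hcd, Hw in E.
    assert (E2 : (1 + d * g) * (a * w3) + d * g * (1 + w3 * a) + 1
       = (1 + d * g) * (1 + w3 * a) + d * g * (a * w3)) by ring.
    lia.
  - assert (E : h * ((c + g * n) * b + g * w3) + (d * g) * b = g * ((d + h * n) * b + h * w3) + (c * h) * b) by ring.
    rewrite Hcd in E. lia.
  - assert (E : b * ((d + h * n) * a + h * w4) + (w3 * a) * h = a * ((d + h * n) * b + h * w3) + (w4 * b) * h) by ring.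
    rewrite Hw in E. lia.
  - nia.
Qed.

Lemma find_seq (f : nat -> bool) (k len s : nat) : s <= k < s + len -> f k = true ->
  (forall j, s <= j < k -> f j = false) -> List.find f (List.seq s len) = Some k.
Proof.
  revert s. induction len as [|len IH]; intros s Hk Hf Hj; [lia|].
  simpl. destruct (Nat.eq_dec s k) as [->|Hne].
  - rewrite Hf. reflexivity.
  - rewrite (Hj s) by lia. apply IH; auto; try lia. intros; apply Hj; lia.
Qed.

Lemma no_smaller (A j k x y : nat) : j < k -> k < A -> j * (A * y + 1) = k * (A * x + 1) -> False.
Proof.
  intros H1 H2 E.
  assert (E' : j * y * A + j = k * x * A + k) by nia.
  destruct (le_lt_dec (j * y) (k * x)) as [L|L].
  - assert (j * y * A <= k * x * A) by (apply Nat.mul_le_mono_r; exact L). lia.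
  - assert ((k * x + 1) * A <= j * y * A) by (apply Nat.mul_le_mono_r; lia). nia.
Qed.

Lemma per_nat (A B r k m s : nat) : r * k = m * A + 1 -> r < A -> k < A -> 2 <= A -> 1 <= s -> B = r + s * A ->
  Nat.gcd A B = 1 /\ A < B /\ alpha A B = s * A /\ beta1 A B = B * k.
Proof.
  intros E Hr Hk HA Hs HB.
  split; [|split; [|split]].
  - set (G := Nat.gcd A B).
    assert (GA : Nat.divide G A) by apply Nat.gcd_divide_l.
    assert (GB : Nat.divide G B) by apply Nat.gcd_divide_r.
    assert (Gr : Nat.divide G r).
    { apply (Nat.divide_add_cancel_r G (s * A) r). apply Nat.divide_mul_r; auto.
      rewrite Nat.add_comm, <- HB; auto. }
    apply Nat.divide_1_r. apply (Nat.divide_add_cancel_r G (m * A) 1).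
    apply Nat.divide_mul_r; auto. rewrite <- E. apply Nat.divide_mul_l; auto.
  - nia.
  - unfold alpha. rewrite HB, Nat.div_add by lia. rewrite Nat.div_small by lia. reflexivity.
  - unfold beta1. f_equal.
    rewrite (find_seq _ k); auto; try lia.
    + apply Nat.eqb_eq. rewrite HB.
      replace (k * (r + s * A)) with (1 + (m + k * s) * A) by nia.
      apply Nat.Div0.mod_add.
    + intros j Hj. apply Nat.eqb_neq. intro Hm.
      rewrite (Nat.mod_small 1) in Hm by lia.
      pose proof (Nat.div_mod (j * B) A ltac:(lia)) as D. rewrite Hm in D.
      apply (no_smaller A j k (j * B / A) (m + k * s)); try lia.
      rewrite <- D. subst B. nia.
Qed.

Open Scope R_scope.
Lemma floor_nat (y : R) : 0 <= y -> exists p : nat, INR p <= y < INR p + 1.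
Proof.
  intros Hy. destruct (archimed y) as [H1 H2].
  assert (Hz : (0 < up y)%Z) by (apply lt_0_IZR; lra).
  exists (Z.to_nat (up y - 1)).
  rewrite INR_IZR_INZ, Z2Nat.id by lia. rewrite minus_IZR. simpl. lra.
Qed.

Lemma nat_div_le (a b c d : nat) : (0 < b)%nat -> (0 < d)%nat -> (a * d <= c * b)%nat ->
  INR a / INR b <= INR c / INR d.
Proof.
  intros Hb Hd H.
  apply lt_0_INR in Hb. apply lt_0_INR in Hd.
  apply le_INR in H. rewrite !mult_INR in H.
  assert (E1 : INR a / INR b = (INR a * INR d) * / (INR b * INR d)) by (field; lra).
  assert (E2 : INR c / INR d = (INR c * INR b) * / (INR b * INR d)) by (field; lra).
  rewrite E1, E2. apply Rmult_le_compat_r; auto.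
  left. apply Rinv_0_lt_compat. nra.
Qed.

Lemma approx (t : R) (n : nat) : 0 <= t <= 1 -> (1 <= n)%nat ->
  exists g h : nat, (0 < h)%nat /\ (g < h)%nat /\ Nat.gcd h g = 1%nat /\
    t - 2 / INR n <= INR g / INR h <= t.
Proof.
  intros Ht Hn.
  assert (Hn' : 1 <= INR n) by (apply (le_INR 1); auto).
  assert (Hn1 : INR (n - 1) = INR n - 1) by (rewrite minus_INR by auto; simpl; lra).
  destruct (floor_nat (t * INR (n - 1))) as [p [Hp1 Hp2]].
  { apply Rmult_le_pos; [lra|apply pos_INR]. }
  rewrite Hn1 in Hp1, Hp2.
  assert (Hpn : (p < n)%nat).
  { apply INR_lt. nra. }
  set (G := Nat.gcd n p).
  assert (HG : G <> 0%nat) by (unfold G; intro E; apply Nat.gcd_eq_0 in E; lia).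
  destruct (Nat.gcd_divide_l n p) as [h Eh]. destruct (Nat.gcd_divide_r n p) as [g Eg].
  fold G in Eh, Eg.
  assert (Dh : (n / G = h)%nat) by (rewrite Eh; apply Nat.div_mul; auto).
  assert (Dg : (p / G = g)%nat) by (rewrite Eg; apply Nat.div_mul; auto).
  exists g, h.
  assert (Hh : (0 < h)%nat) by (destruct h; lia).
  split; [auto|split; [|split]].
  - destruct (Nat.lt_ge_cases g h) as [|L]; auto.
    assert (g * G >= h * G)%nat by (apply Nat.mul_le_mono_r; auto). lia.
  - rewrite <- Dh, <- Dg. apply Nat.gcd_div_gcd; auto.
  - assert (E : INR g / INR h = INR p / INR n).
    { rewrite Eh, Eg, !mult_INR. field. split; apply not_0_INR; lia. }
    rewrite E.
    assert (Hn0 : 0 < INR n) by lra.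
    split.
    + apply (Rmult_le_reg_r (INR n)); auto. unfold Rdiv.
      rewrite Rmult_minus_distr_r, !Rmult_assoc, Rinv_l by lra. nra.
    + apply (Rmult_le_reg_r (INR n)); auto. unfold Rdiv.
      rewrite !Rmult_assoc, Rinv_l by lra. nra.
Qed.

Lemma err (x A g h e n : nat) : (0 < A)%nat -> (0 < h)%nat -> (0 < n)%nat ->
  (h * x = g * A + e)%nat -> (n * e <= h * A)%nat ->
  INR g / INR h <= INR x / INR A <= INR g / INR h + 1 / INR n.
Proof.
  intros HA Hh Hn E L. split.
  - apply nat_div_le; auto. nia.
  - replace (INR g / INR h + 1 / INR n) with (INR (g * n + h) / INR (h * n)).
    + apply nat_div_le; auto. nia. nia.
    + rewrite plus_INR, !mult_INR. field. split; apply not_0_INR; lia.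
Qed.
Lemma inv_bound (N i : nat) : (0 < N)%nat -> (N <= i)%nat -> 3 / INR (i + 2) <= 3 * / INR N.
Proof.
  intros HN Hi. unfold Rdiv. apply Rmult_le_compat_l; [lra|].
  apply Rinv_le_contravar. apply lt_0_INR; auto. apply le_INR; lia.
Qed.

Lemma lub_gen (U : (nat -> Prop) -> Prop) (A x : nat -> nat) (t : R) :
  ultrafilter U -> (forall N, U (fun i => (N <= i)%nat)) -> (forall i, (0 < A i)%nat) ->
  (forall i, t - 3 / INR (i + 2) <= INR (x i) / INR (A i) <= t + 3 / INR (i + 2)) ->
  is_lub (fun r => exists p q : nat, q <> 0%nat /\ U (fun i => (p * A i <= q * x i)%nat) /\
                    r = INR p / INR q) t.
Proof.
  intros [HF [HT [Hmono [Hint Hdich]]]] Hcof HA Hx. split.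
  - intros r [p [q [Hq [HU ->]]]].
    destruct (Rle_or_lt (INR p / INR q) t) as [|Hlt]; auto. exfalso.
    destruct (archimed_cor1 ((INR p / INR q - t) / 3)) as [N [HN1 HN2]]; [lra|].
    apply HF. apply (Hmono _ _ (Hint _ _ (Hcof N) HU)).
    intros i [Hi Hpq].
    assert (H1 := nat_div_le p q (x i) (A i) ltac:(lia) (HA i) ltac:(lia)).
    assert (H2 := inv_bound N i HN2 Hi). specialize (Hx i). lra.
  - intros M HM.
    destruct (Rle_or_lt t M) as [|Hlt]; auto. exfalso.
    destruct (Rlt_or_le M 0) as [Hneg|Hpos].
    + assert (H0 : INR 0 / INR 1 <= M).
      { apply HM. exists 0%nat, 1%nat. split; [lia|split; [|reflexivity]].
        apply (Hmono _ _ HT). intros; simpl; lia. }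
      simpl in H0. lra.
    + destruct (archimed_cor1 ((t - M) / 4)) as [N [HN1 HN2]]; [lra|].
      assert (HN : 0 < INR N) by (apply lt_0_INR; auto).
      destruct (floor_nat (M * INR N)) as [p [Hp1 Hp2]]; [nra|].
      assert (E : INR (S p) / INR N = (INR p + 1) / INR N) by (rewrite S_INR; reflexivity).
      assert (Hgt : M < INR (S p) / INR N).
      { rewrite E. apply (Rmult_lt_reg_r (INR N)); auto. unfold Rdiv.
        rewrite Rmult_assoc, Rinv_l by lra. lra. }
      assert (Hle : INR (S p) / INR N <= M + / INR N).
      { rewrite E. apply (Rmult_le_reg_r (INR N)); auto. unfold Rdiv.
        assert (Hi : / INR N * INR N = 1) by (apply Rinv_l; lra).
        rewrite Rmult_assoc, Hi, (Rmult_plus_distr_r M), Hi. lra. }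
      assert (Hin : INR (S p) / INR N <= M).
      { apply HM. exists (S p), N. split; [lia|split; [|reflexivity]].
        apply (Hmono _ _ (Hcof N)). intros i Hi.
        destruct (Nat.le_gt_cases (S p * A i) (N * x i)) as [|Hc]; auto. exfalso.
        assert (H1 := nat_div_le (x i) (A i) (S p) N (HA i) HN2 ltac:(lia)).
        assert (H2 := inv_bound N i HN2 Hi). specialize (Hx i). lra. }
      lra.
Qed.

Lemma is_lub_ext (E F : R -> Prop) (t : R) : (forall r, E r <-> F r) -> is_lub E t -> is_lub F t.
Proof.
  intros H [H1 H2]. split.
  - intros r Hr. apply H1, H, Hr.
  - intros M HM. apply H2. intros r Hr. apply HM, H, Hr.
Qed.
Definition Pi (q1 q2 : R) (i A B r k : nat) : Prop :=
  (2 <= A)%nat /\ (A < B)%nat /\ Nat.gcd A B = 1%nat /\ alpha A B = ((i + 2) * A)%nat /\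
  B = (r + (i + 2) * A)%nat /\ beta1 A B = (B * k)%nat /\
  q1 - 3 / INR (i + 2) <= INR r / INR A <= q1 + 3 / INR (i + 2) /\
  q2 - 3 / INR (i + 2) <= INR k / INR A <= q2 + 3 / INR (i + 2).

Lemma per_i (q1 q2 : R) (i : nat) : 0 <= q1 <= 1 -> 0 <= q2 <= 1 ->
  exists A B r k, Pi q1 q2 i A B r k.
Proof.
  intros H1 H2. set (n := (i + 2)%nat).
  destruct (approx q1 n H1 ltac:(unfold n; lia)) as [g [h [Hh [Hgh [Gg Eg]]]]].
  destruct (approx q2 n H2 ltac:(unfold n; lia)) as [a [b [Hb [Hab [Ga Ea]]]]].
  destruct (family g h a b n Hh Hb Gg Ga ltac:(unfold n; lia)) as [A [r [k [m [E1 [E2 [E3 E4]]]]]]].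
  assert (HA2 : (2 <= A)%nat) by (unfold n in E4; nia).
  assert (Hr : (r < A)%nat).
  { assert (h * r < h * A)%nat by (unfold n in E4; nia). nia. }
  assert (Hk : (k < A)%nat).
  { assert (b * k < b * A)%nat by (unfold n in E4; nia). nia. }
  exists A, (r + n * A)%nat, r, k.
  destruct (per_nat A (r + n * A) r k m n E1 Hr Hk HA2 ltac:(unfold n; lia) eq_refl)
    as [P1 [P2 [P3 P4]]].
  assert (Hn : 0 < INR n) by (apply lt_0_INR; unfold n; lia).
  assert (B2 : 2 / INR n <= 3 / INR n) by (unfold Rdiv; apply Rmult_le_compat_r; [left; apply Rinv_0_lt_compat; auto| lra]).
  assert (B1 : 1 / INR n <= 3 / INR n) by (unfold Rdiv; apply Rmult_le_compat_r; [left; apply Rinv_0_lt_compat; auto| lra]).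
  assert (Er := err r A g h b n ltac:(lia) Hh ltac:(unfold n; lia) E2 ltac:(unfold n in *; nia)).
  assert (Ek := err k A a b h n ltac:(lia) Hb ltac:(unfold n; lia) E3 ltac:(unfold n in *; nia)).
  unfold Pi; fold n. repeat split; auto; lra.
Qed.

Theorem proposition2p8 (q1 q2 : R) :
  0 <= q1 <= 1 -> 0 <= q2 <= 1 ->
  exists (U : (nat -> Prop) -> Prop) (A B : nat -> nat),
    ultrafilter U /\ nonprincipal U /\
    (forall i, (2 <= A i)%nat /\ (A i < B i)%nat /\ Nat.gcd (A i) (B i) = 1%nat) /\
    limit_2_semigroup U A B /\
    is_lub (ratio_set U B (fun i => alpha (A i) (B i)) A up_zero) q1 /\
    is_lub (ratio_set U (fun i => beta1 (A i) (B i)) up_zero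
                        (fun i => (A i * B i)%nat) up_zero) q2.
Proof.
  intros H1 H2.
  destruct UF.uf_exists as [U [HU [HNP Hcof]]].
  destruct (functional_choice (fun (i : nat) (t : (nat * nat) * (nat * nat)) =>
     Pi q1 q2 i (fst (fst t)) (snd (fst t)) (fst (snd t)) (snd (snd t))))
     as [F HF].
  { intros i. destruct (per_i q1 q2 i H1 H2) as [A [B [r [k P]]]].
    exists ((A, B), (r, k)). exact P. }
  set (A := fun i => fst (fst (F i))). set (B := fun i => snd (fst (F i))).
  set (r := fun i => fst (snd (F i))). set (k := fun i => snd (snd (F i))).
  assert (HP : forall i, Pi q1 q2 i (A i) (B i) (r i) (k i)) by (intro i; apply HF).
  clearbody A B r k.
  pose proof HU as [HF0 [HT [Hmono [Hint Hdich]]]].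
  assert (Hiff : forall P Q : nat -> Prop, (forall i, P i <-> Q i) -> (U P <-> U Q)).
  { intros P Q H; split; intro HP'; apply (Hmono _ _ HP'); intro i; apply H. }
  exists U, A, B. split; [auto|split; [auto|split; [|split; [|split]]]].
  - intro i; destruct (HP i) as [? [? [? _]]]; auto.
  - intros [T [f [HTn [h1 [h2 [h3 [h4 [h5 h6]]]]]]]].
    assert (eA : forall K, up_elt U A B (fun i => (K * A i)%nat)).
    { intro K. apply (Hmono _ _ HT). intros i _. exists K, 0%nat. lia. }
    assert (eB : up_elt U A B B).
    { apply (Hmono _ _ HT). intros i _. exists 0%nat, 1%nat. lia. }
    assert (fK : forall K, f (fun i => (K * A i)%nat) = (K * f A)%nat).
    { induction K as [|K IH].
      - exact h6.
      - change (fun i => (S K * A i)%nat) with (up_add A (fun i => (K * A i)%nat)).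
        rewrite h4. rewrite IH. simpl. reflexivity.
        apply (Hmono _ _ HT). intros i _. exists 1%nat, 0%nat. lia. apply eA. }
    assert (fA : (0 < f A)%nat).
    { rewrite <- h6. apply h5. apply (eA 0%nat). apply (Hmono _ _ HT). intros i _. exists 1%nat, 0%nat. lia.
      apply (Hmono _ _ HT). intros i _. destruct (HP i) as [? _]. unfold up_zero. lia. }
    assert (Hlt : (f (fun i => (f B * A i)%nat) < f B)%nat).
    { apply h5; auto. apply (Hmono _ _ (Hcof (f B))). intros i Hi.
      destruct (HP i) as [Ha [_ [_ [_ [EB _]]]]]. rewrite EB. nia. }
    rewrite fK in Hlt. nia.
  - apply (is_lub_ext (fun z => exists p q : nat, q <> 0%nat /\ U (fun i => (p * A i <= q * r i)%nat) /\ z = INR p / INR q)).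
    + intro z. unfold ratio_set. split; intros [p [q [Hq [HUq Hz]]]]; exists p, q; split; auto; split; auto;
      revert HUq; apply Hiff; intro i; destruct (HP i) as [_ [_ [_ [Eal [EB _]]]]];
      unfold up_zero; rewrite Eal, EB; split; intro; nia.
    + apply lub_gen; auto.
      * intro i; destruct (HP i) as [? _]; lia.
      * intro i; destruct (HP i) as [_ [_ [_ [_ [_ [_ [? _]]]]]]]; auto.
  - apply (is_lub_ext (fun z => exists p q : nat, q <> 0%nat /\ U (fun i => (p * A i <= q * k i)%nat) /\ z = INR p / INR q)).
    + intro z. unfold ratio_set. split; intros [p [q [Hq [HUq Hz]]]]; exists p, q; split; auto; split; auto;
      revert HUq; apply Hiff; intro i; destruct (HP i) as [HA2 [HAB [_ [_ [_ [Eb _]]]]]];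
      unfold up_zero; rewrite Eb; rewrite !Nat.mul_0_r, !Nat.add_0_r; split; intro Hx.
      * apply (Nat.mul_le_mono_pos_r _ _ (B i)); [lia|]. nia.
      * apply (Nat.mul_le_mono_pos_r _ _ (B i)) in Hx; [|lia]. nia.
      * apply (Nat.mul_le_mono_pos_r _ _ (B i)) in Hx; [|lia]. nia.
      * apply (Nat.mul_le_mono_pos_r _ _ (B i)); [lia|]. nia.
    + apply lub_gen; auto.
      * intro i; destruct (HP i) as [? _]; lia.
      * intro i; destruct (HP i) as [_ [_ [_ [_ [_ [_ [_ ?]]]]]]]; auto.
Qed.
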